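(* Let $X$ be a topological space and let $k\ge1$ be an integer. The following statements are equivalent: (1) $X$ is a uniformizable functional Alexandroff space; (1') $X$ is a uniformizable $k$-primal space; (2) $X$ is a uniformizable Alexandroff space such that $V(x)$ is finite for each $x\in X$; (3) $\{V(a):a\in X\}$ is a partition of $X$ into finite open subsets; (4) there exists a partition $\mathcal P$ of $X$ into finite subsets such that $\mathcal F_{\mathcal P}:=\{\alpha\subseteq X\times X:\bigcup\{D\times D:D\in\mathcal P\}\subseteq\alpha\}$ is a uniform structure compatible with the topology of $X$; (5) there exists a map $f:X\to X$ with $\mathrm{Per}(f)=X$ such that the topology of $X$ is the functional Alexandroff topology associated to $f$.
   Context: For a topological space $X$ and $a\in X$, $V(a):=\bigcap\{U: U\text{ open}, a\in U\}$; $X$ is Alexandroff if each $V(a)$ is open. For $f:X\to X$ and $a\in X$, $V_f(a):=\{x\in X:\exists n\ge0,\ f^n(x)=a\}$; the functional Alexandroff topology associated to $f$ is the topology with basis $\{V_f(a):a\in X\}$, and $X$ is a functional Alexandroff space if its topology is the functional Alexandroff topology of some $f:X\to X$. $X$ is $k$-primal if there are $f_1,\dots,f_k:X\to X$ such that for every $a\in X$, $V_{f_1}(a)\cap\dots\cap V_{f_k}(a)$ is open and is the smallest open neighbourhood of $a$. $\mathrm{Per}(f)=\{x\in X:\exists n\ge1,\ f^n(x)=x\}$ is the set of periodic points of $f$. A uniform structure $\mathcal F$ on $X$ (nonempty family of subsets of $X\times X$ containing $\Delta_X$ in each member, closed under supersets, finite intersections and inverses, and such that each $\alpha\in\mathcal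 F$ contains $\beta\circ\beta$ for some $\beta\in\mathcal F$) is compatible with the topology of $X$ if the topology $\{U:\forall x\in U\ \exists\alpha\in\mathcal F,\ \alpha[x]\subseteq U\}$, $\alpha[x]=\{y:(x,y)\in\alpha\}$, equals it; $X$ is uniformizable if a compatible uniform structure exists. *)

(* Defs.v *)
From mathcomp Require Import all_boot all_order.
From mathcomp Require Import boolp classical_sets cardinality topology.
Set Implicit Arguments. Unset Strict Implicit. Unset Printing Implicit Defensive.
Local Open Scope classical_set_scope.

Section Defs.
Variable X : topologicalType.

Definition Vmin (a : X) : set X := [set x | forall U : set X, open U -> U a -> U x].

Definition alexandroff : Prop := forall a : X, open (Vmin a).

Definition Vf (f : X -> X) (a : X) : set X := [set x | exists n : nat, iter n f x = a].

(* the topology of X is the topology with basis {V_f(a) : a in X}: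
   open sets are exactly the unions of subfamilies of the basis *)
Definition is_functional_topology (f : X -> X) : Prop :=
  forall U : set X, open U <-> exists A : set X, U = \bigcup_(a in A) Vf f a.

Definition functional_alexandroff : Prop :=
  exists f : X -> X, is_functional_topology f.

Definition smallest_open_nbhd (W : set X) (a : X) : Prop :=
  [/\ open W, W a & forall U : set X, open U -> U a -> W `<=` U].

Definition k_primal (k : nat) : Prop :=
  exists fs : 'I_k -> X -> X, forall a : X,
    smallest_open_nbhd (\bigcap_(i in [set: 'I_k]) Vf (fs i) a) a.

Definition Per (f : X -> X) : set X := [set x | exists n : nat, (0 < n)%N /\ iter n f x = x].

Definition rel_inv (al : set (X * X)) : set (X * X) := [set p | al (p.2, p.1)].
Definition rel_comp (al be : set (X * X)) : set (X * X) :=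
  [set p | exists y : X, al (p.1, y) /\ be (y, p.2)].

Definition uniform_structure (F : set (set (X * X))) : Prop :=
  F !=set0 /\ (forall al, F al -> forall x : X, al (x, x)) /\
  [/\ (forall al be, F al -> al `<=` be -> F be),
      (forall al be, F al -> F be -> F (al `&` be)),
      (forall al, F al -> F (rel_inv al)) &
      (forall al, F al -> exists be, F be /\ rel_comp be be `<=` al)].

Definition compatible (F : set (set (X * X))) : Prop :=
  forall U : set X, open U <->
    (forall x, U x -> exists al, F al /\ [set y | al (x, y)] `<=` U).

Definition uniformizable : Prop :=
  exists F : set (set (X * X)), uniform_structure F /\ compatible F.

Definition is_partition (P : set (set X)) : Prop :=
  [/\ (forall D, P D -> D !=set0),
      (forall D E, P D -> P E -> D = E \/ D `&` E = set0) &
      (forall x : X, exists D, P D /\ D x)].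

Definition F_of_partition (P : set (set X)) : set (set (X * X)) :=
  [set al | forall D, P D -> forall x y : X, D x -> D y -> al (x, y)].

End Defs.

(* Main.v *)
Require Import Defs.
From mathcomp Require Import all_boot all_order.
From mathcomp Require Import boolp classical_sets cardinality topology.
From mathcomp Require Import finmap.
Set Implicit Arguments. Unset Strict Implicit.
Local Open Scope classical_set_scope.

Lemma cyc_iter (T : eqType) (x : T) (q : seq T) : uniq (x :: q) ->
  forall n, (n <= size q)%N -> iter n (next (x :: q)) x = nth x (x :: q) n.
Proof.
move=> uq; elim=> [//|n IH] hn.
rewrite iterS IH; last exact: ltnW.
have hn' : (n < size (x :: q))%N by rewrite /= ltnS ltnW.
rewrite next_nth mem_nth // index_uniq //.
Qed.

Lemma cyc_last (T : eqType) (x : T) (q : seq T) : uniq (x :: q) ->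
  iter (size (x :: q)) (next (x :: q)) x = x.
Proof.
move=> uq; rewrite [size _]/= iterS cyc_iter // next_nth mem_nth //. rewrite index_uniq //=.
by rewrite nth_default.
Qed.

Lemma cyc_main (T : eqType) (p : seq T) (x : T) : uniq p -> x \in p ->
  iter (size p) (next p) x = x /\ forall y, y \in p -> exists n, iter n (next p) x = y.
Proof.
move=> up xp; case: (rot_to xp) => i q hq.
have en : next p =1 next (x :: q) by move=> z; rewrite -hq next_rot.
have uq : uniq (x :: q) by rewrite -hq rot_uniq.
split.
  by rewrite (eq_iter en) -(size_rot i) hq cyc_last.
move=> y; rewrite -(mem_rot i) hq => yq.
exists (index y (x :: q)); rewrite (eq_iter en) cyc_iter //.
  by rewrite nth_index.
by rewrite -ltnS; have := index_mem y (x :: q); rewrite yq.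
Qed.

Lemma iter_mod (T : Type) (f : T -> T) a p : iter p f a = a ->
  forall m, iter m f a = iter (m %% p) f a.
Proof.
move=> hp m; rewrite {1}(divn_eq m p) addnC iterD.
congr (iter _ f _); elim: (m %/ p) => [//|k IH].
by rewrite mulSn iterD IH hp.
Qed.

Lemma orbit_finite (T : Type) (f : T -> T) a p : (0 < p)%N -> iter p f a = a ->
  finite_set [set x | exists m, iter m f a = x].
Proof.
move=> p0 hp; apply: (sub_finite_set _ (finite_image (fun i => iter i f a) (finite_II p))).
move=> x [m <-]; exists (m %% p); first by rewrite /= ltn_pmod.
by rewrite -iter_mod.
Qed.
Section T.
Variable X : topologicalType.
Implicit Types (a b x y z : X) (f : X -> X).

Definition symV := forall x y : X, Vmin y x -> Vmin x y.

Lemma Vmin_refl a : Vmin a a. Proof. by move=> U. Qed.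
Lemma Vmin_trans a x y : Vmin a x -> Vmin x y -> Vmin a y.
Proof. by move=> h1 h2 U oU Ua; apply: h2 => //; apply: h1. Qed.

Lemma Vmin_same (hs : symV) a z : Vmin a z -> Vmin z = Vmin a.
Proof.
move=> az; apply/seteqP; split=> x.
  exact: Vmin_trans.
by move=> ax; apply: Vmin_trans (hs _ _ az) ax.
Qed.

Lemma unif_sym : uniformizable X -> symV.
Proof.
move=> [F [[_ [diag [up _ inv compo]]] comp]] x y Vyx U oU Ux.
have [al [Fal sub]] := (comp U).1 oU x Ux.
pose O := [set w | exists ep, F ep /\ [set v | ep (w, v)] `<=` [set v | al (v, y)]].
have oO : open O.
  apply/(comp O).2 => w [ep [Fep sube]].
  have [eta [Feta ceta]] := compo ep Fep.
  exists eta; split=> // w' eww'.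
  exists eta; split=> // v ew'v.
  by apply: sube; apply: ceta; exists w'.
have Oy : O y by exists (rel_inv al); split; [exact: inv|].
have [ep [Fep sube]] := Vyx O oO Oy.
exact: sub (sube x (diag ep Fep x)).
Qed.

Lemma sym_partition (hs : symV) : is_partition [set D | exists a, D = Vmin a].
Proof.
split.
- by move=> D [a ->]; exists a; exact: Vmin_refl.
- move=> D E [a ->] [b ->].
  have [[z [za zb]]|nz] := pselect (exists z, Vmin a z /\ Vmin b z).
    by left; rewrite -(Vmin_same hs za) (Vmin_same hs zb).
  right; apply/seteqP; split=> // z [za zb]; apply: nz; by exists z.
- by move=> x; exists (Vmin x); split; [exists x|exact: Vmin_refl].
Qed.

Section Fun.
Variables (f : X -> X) (hf : is_functional_topology f).

Lemma Vf_self a : Vf f a a. Proof. by exists 0%N. Qed.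

Lemma Vf_open a : open (Vf f a).
Proof. by apply/(hf _).2; exists [set a]; rewrite bigcup_set1. Qed.

Lemma Vf_sub U a : open U -> U a -> Vf f a `<=` U.
Proof.
move=> /(hf _).1 [A ->] [b Ab [n hn]] x [m hm].
by exists b => //; exists (n + m)%N; rewrite iterD hm.
Qed.

Lemma Vmin_Vf a : Vmin a = Vf f a.
Proof.
apply/seteqP; split=> x.
  by move/(_ _ (Vf_open a) (Vf_self a)).
by move=> hx U oU Ua; apply: (Vf_sub oU Ua).
Qed.
End Fun.

Lemma open_union_Vmin (ho : forall a, open (Vmin a)) (U : set X) :
  open U <-> U = \bigcup_(a in U) Vmin a.
Proof.
split.
  move=> oU; apply/seteqP; split=> x.
    by move=> Ux; exists x => //; exact: Vmin_refl.
  by move=> [a Ua /(_ U oU Ua)].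
by move=> ->; apply: bigcup_open => a _; exact: ho.
Qed.

End T.

Section P.
Variable X : topologicalType.

Definition P3 := is_partition [set D | exists a : X, D = Vmin a] /\
            (forall a : X, finite_set (Vmin a) /\ open (Vmin a)).
Definition P4 := exists P : set (set X), [/\ is_partition P,
              (forall D, P D -> finite_set D),
              uniform_structure (F_of_partition P) &
              compatible (F_of_partition P)].
Definition P5 := exists f : X -> X, Per f = setT /\ is_functional_topology f.

Lemma P3_sym : P3 -> symV X.
Proof.
move=> [[_ dj _] _] x y yx.
case: (dj (Vmin y) (Vmin x)); [by exists y|by exists x| |].
  by move=> e; rewrite -e; exact: Vmin_refl.
move=> h; exfalso; have : (Vmin y `&` Vmin x) x.
  by rewrite /setI /=; split; [exact: yx|exact: Vmin_refl].
by rewrite h.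
Qed.

Lemma h34 : P3 -> P4.
Proof.
move=> h3; have hs := P3_sym h3; case: h3 => hp hfo.
pose Dl := [set p : X * X | exists a, Vmin a p.1 /\ Vmin a p.2].
have FD : F_of_partition [set D | exists a : X, D = Vmin a] Dl.
  by move=> D [a ->] x y ax ay; exists a.
exists [set D | exists a, D = Vmin a]; split => //.
- by move=> D [a ->]; case: (hfo a).
- split; first by exists setT.
  split; first by move=> al Fal x; apply: (Fal (Vmin x)); [exists x|exact: Vmin_refl..].
  split.
  + by move=> al be Fal sub D PD x y Dx Dy; apply: sub; exact: (Fal D PD x y Dx Dy).
  + by move=> al be Fa Fb D PD x y Dx Dy; exact: (conj (Fa D PD x y Dx Dy) (Fb D PD x y Dx Dy)).
  + by move=> al Fal D PD x y Dx Dy; exact: (Fal D PD y x).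
  + move=> al Fal; exists Dl; split => //.
    move=> [x y] [z [[a [/= ax az]] [b [/= bz yb]]]] /=.
    apply: (Fal (Vmin a)); [by exists a|exact: ax|].
    by rewrite -(Vmin_same hs az) (Vmin_same hs bz).
- move=> U; split.
  + move=> oU x Ux; exists Dl; split => // y [a [/= ax ay]].
    have : Vmin x y by rewrite (Vmin_same hs ax).
    by move/(_ U oU Ux).
  + move=> h; apply/(open_union_Vmin (fun a => (hfo a).2)); apply/seteqP; split=> x.
      by move=> Ux; exists x => //; exact: Vmin_refl.
    move=> [a Ua ay]; have [al [Fal sub]] := h a Ua; apply: sub.
    by apply: (Fal (Vmin a)); [exists a|exact: Vmin_refl|].
Qed.

Lemma h43 : P4 -> P3.
Proof.
move=> [P [[ne dj cov] fin _ comp]].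
have blk : forall D E x, P D -> P E -> D x -> E x -> D = E.
  move=> D E x PD PE Dx Ex; case: (dj D E PD PE) => // h; exfalso.
  have : (D `&` E) x by rewrite /setI /=; split.
  by rewrite h.
pose Dl := [set p : X * X | exists D, P D /\ D p.1 /\ D p.2].
have FD : F_of_partition P Dl by move=> D PD x y Dx Dy; exists D.
have Dopen : forall D, P D -> open D.
  move=> D PD; apply/(comp D).2 => x Dx; exists Dl; split => // y [E [PE [/= Ex Ey]]].
  by rewrite (blk D E x).
have VD : forall D a, P D -> D a -> Vmin a = D.
  move=> D a PD Da; apply/seteqP; split=> x.
    by move=> ax; exact: ax D (Dopen D PD) Da.
  move=> Dx U oU Ua; have [al [Fal sub]] := (comp U).1 oU a Ua; apply: sub.
  exact: Fal D PD a x Da Dx.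
split.
- split.
  + by move=> D [a ->]; exists a; exact: Vmin_refl.
  + move=> D E [a ->] [b ->].
    have [Da [PDa Daa]] := cov a; have [Db [PDb Dbb]] := cov b.
    by rewrite (VD Da a) // (VD Db b) //; apply: dj.
  + by move=> x; exists (Vmin x); split; [exists x|exact: Vmin_refl].
- move=> a; have [D [PD Da]] := cov a; rewrite (VD D a) //.
  by split; [exact: fin|exact: Dopen].
Qed.

Lemma h4u : P4 -> uniformizable X.
Proof. by move=> [P [_ _ u c]]; exists (F_of_partition P). Qed.

Lemma h35 : P3 -> P5.
Proof.
move=> h3; have hs := P3_sym h3; case: h3 => hp hfo.
pose s (x : X) := enum_fset (fset_set (Vmin x)).
have ms : forall x y, (y \in s x) <-> Vmin x y.
  move=> x y; rewrite /s (in_fset_set (hfo x).1).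
  by split; [exact: set_mem|exact: mem_set].
have ss : forall x y, Vmin x y -> s y = s x by move=> x y xy; rewrite /s (Vmin_same hs xy).
pose f x := next (s x) x.
have it : forall x n, Vmin x (iter n f x) /\ iter n f x = iter n (next (s x)) x.
  move=> x; elim=> [|n [h1 h2]] /=; first by split; [exact: Vmin_refl|].
  rewrite /f (ss _ _ h1); split; last by rewrite h2.
  by apply/ms; rewrite mem_next; apply/ms.
have xs : forall x, x \in s x by move=> x; apply/ms; exact: Vmin_refl.
have Vfe : forall a, Vf f a = Vmin a.
  move=> a; apply/seteqP; split=> x.
    by move=> [n hn]; apply: hs; rewrite -hn; exact: (it x n).1.
  move=> ax; have /ms axs := hs _ _ ax.
  have [_ h] := cyc_main (fset_uniq _) (xs x).
  have [n hn] := h a axs; exists n; by rewrite (it x n).2.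
exists f; split.
  apply/seteqP; split=> // x _; exists (size (s x)); split.
    by move: (xs x); case: (s x).
  by rewrite (it x _).2; exact: (cyc_main (fset_uniq _) (xs x)).1.
move=> U; split.
  move=> oU; exists U; rewrite {1}((open_union_Vmin (fun a => (hfo a).2) U).1 oU).
  by apply: eq_bigcupr => a _; rewrite Vfe.
by move=> [A ->]; apply: bigcup_open => a _; rewrite Vfe; exact: (hfo a).2.
Qed.

Lemma h53 : P5 -> P3.
Proof.
move=> [f [hper hf]].
have symVf : forall a x, Vf f a x -> Vf f x a.
  move=> a x [n hn]; have : Per f x by rewrite hper.
  case=> p [p0 hp]; exists (p * n - n)%N.
  by rewrite -hn -iterD subnK ?leq_pmull // (iter_mod hp) modnMr.
have hs : symV X by move=> x y; rewrite !(Vmin_Vf hf); exact: symVf.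
split; first exact: sym_partition hs.
move=> a; rewrite (Vmin_Vf hf); split; last exact: Vf_open.
have : Per f a by rewrite hper.
case=> p [p0 hp]; apply: sub_finite_set (orbit_finite p0 hp).
by move=> x /symVf [m hm]; exists m.
Qed.

Lemma h15 : uniformizable X /\ functional_alexandroff X -> P5.
Proof.
move=> [hu [f hf]]; exists f; split => //.
have hs := unif_sym hu.
apply/seteqP; split=> // x _.
have : Vmin (f x) x by rewrite (Vmin_Vf hf); exists 1%N.
move/hs; rewrite (Vmin_Vf hf) => -[n hn].
by exists n.+1; split => //; rewrite iterSr.
Qed.

Lemma h51 : P5 -> uniformizable X /\ functional_alexandroff X.
Proof.
move=> h5; split; first exact: h4u (h34 (h53 h5)).
by case: h5 => f [_ hf]; exists f.
Qed.

Lemma h23 : [/\ uniformizable X, alexandroff X & forall x : X, finite_set (Vmin x)] -> P3.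
Proof.
move=> [hu ha hfin]; split; first exact: sym_partition (unif_sym hu).
by move=> a; split.
Qed.

Lemma h32 : P3 -> [/\ uniformizable X, alexandroff X & forall x : X, finite_set (Vmin x)].
Proof.
move=> h3; split; first exact: h4u (h34 h3).
  by move=> a; case: (h3.2 a).
by move=> a; case: (h3.2 a).
Qed.

Lemma h11' k (hk : (1 <= k)%N) :
  uniformizable X /\ functional_alexandroff X -> uniformizable X /\ k_primal X k.
Proof.
move=> [hu [f hf]]; split => //.
exists (fun _ => f) => a.
have -> : \bigcap_(i in [set: 'I_k]) Vf f a = Vf f a.
  apply/seteqP; split=> x.
    by move/(_ (Ordinal hk) I).
  by move=> h i _.
split; [exact: (@Vf_open X f hf a)|by exists 0%N|].
by move=> U oU Ua; exact: (@Vf_sub X f hf U a oU Ua).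
Qed.

Lemma h1'2 k (hk : (1 <= k)%N) : uniformizable X /\ k_primal X k ->
  [/\ uniformizable X, alexandroff X & forall x : X, finite_set (Vmin x)].
Proof.
move=> [hu [fs hfs]]; have hs := unif_sym hu.
have WV : forall a, \bigcap_(i in [set: 'I_k]) Vf (fs i) a = Vmin a.
  move=> a; have [o aW min] := hfs a; apply/seteqP; split=> x.
    by move=> Wx U oU Ua; exact: min U oU Ua x Wx.
  by move=> ax; exact: ax _ o aW.
split => //.
  by move=> a; rewrite -WV; case: (hfs a).
move=> a; pose f0 := fs (Ordinal hk).
have sub0 : forall x, Vmin a x -> Vf f0 x a /\ Vf f0 a x.
  move=> x ax; have h1 : Vmin x a := hs _ _ ax.
  rewrite -WV in h1; rewrite -WV in ax.
  by split; [exact: (h1 (Ordinal hk) I)|exact: (ax (Ordinal hk) I)].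
case: (pselect (exists x, Vmin a x /\ x <> a)) => [[x [ax xa]]|nx].
  have [[m hm] [n hn]] := sub0 x ax.
  have p0 : (0 < n + m)%N.
    rewrite addn_gt0; apply/orP; right; rewrite lt0n; apply/eqP => m0.
    by apply: xa; rewrite -hm m0.
  have hp : iter (n + m) f0 a = a by rewrite iterD hm.
  apply: sub_finite_set (orbit_finite p0 hp) => y ay.
  by have [[m' hm'] _] := sub0 y ay; exists m'.
apply: sub_finite_set (finite_set1 a) => y ay.
by apply: contrapT => ya; apply: nx; exists y.
Qed.

End P.

Unset Implicit Arguments.

Theorem mainTheorem8 (X : topologicalType) (k : nat) (hk : (1 <= k)%N) :
  let P1 := uniformizable X /\ functional_alexandroff X in
  let P1' := uniformizable X /\ k_primal X k in
  let P2 := [/\ uniformizable X, alexandroff X & forall x : X, finite_set (Vmin x)] in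
  let P3 := is_partition [set D | exists a : X, D = Vmin a] /\
            (forall a : X, finite_set (Vmin a) /\ open (Vmin a)) in
  let P4 := exists P : set (set X), [/\ is_partition P,
              (forall D, P D -> finite_set D),
              uniform_structure (F_of_partition P) &
              compatible (F_of_partition P)] in
  let P5 := exists f : X -> X, Per f = setT /\ is_functional_topology f in
  [/\ P1 <-> P1', P1 <-> P2, P1 <-> P3, P1 <-> P4 & P1 <-> P5].
Proof.
cbv zeta; split; split.
- exact: h11'.
- by move=> h; apply: h51; apply: h35; apply: h23; exact: h1'2 hk h.
- by move=> h; apply: h32; apply: h53; exact: h15.
- by move=> h; apply: h51; apply: h35; exact: h23.
- by move=> h; apply: h53; exact: h15.
- by move=> h; apply: h51; exact: h35.
- by move=> h; apply: h34; apply: h53; exact: h15.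
- by move=> h; apply: h51; apply: h35; exact: h43.
- exact: h15.
- exact: h51.
Qed.
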